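(* Let $0\le d\le\rho(m)-1$ and let $n\ge h$ be an integer such that $n\not\equiv h-\rho(m)+L_1(d)+j\pmod{L_2}$ for every $j\in\{0,1,\dots,d\}$. Then \[ \sum_{f\in A(d)} y(n-f)\;<\;Tot(d). \]
   Context: For $u\in\mathbb{R}$ let $\mathbf 1[u]=1$ if $u\ge 0$ and $\mathbf 1[u]=0$ if $u<0$. Let $m$ be a positive integer and let $\rho(m)$ denote the number of primes $p$ with $2m<p<3m$; assume $\rho(m)\ge 2$. List these primes as $p_0>p_1>\dots>p_{\rho(m)-1}$ and put $\alpha_i=3m-p_i$. Let $k=(6m-1)\rho(m)$, $\mu_i=\lfloor k/p_i\rfloor$, $\beta_i=k-p_i\mu_i$. Define weights $\bar a_j$, $1\le j\le k$: if $\rho(m)$ is even, $\bar a_j=2$ if $j=\ell p_i$ for some $i$ and some $\ell$ with $1\le \ell\le 3\rho(m)/2$, $\bar a_j=-2$ if $j=\ell p_i$ with $3\rho(m)/2<\ell\le 2\rho(m)$, and $\bar a_j=0$ otherwise; if $\rho(m)$ is odd, $\bar a_j=2$ if $j=\ell p_i$ with $1\le\ell\le (3\rho(m)-1)/2$, $\bar a_j=-2$ if $j=\ell p_i$ with $(3\rho(m)+1)/2\le \ell\le 2\rho(m)-2$, $\bar a_j=-1$ if $j=\ell p_i$ with $\ell\in\{2\rho(m)-1,2\rho(m)\}$, and $\bar a_j=0$ otherwise (well defined since the sets $\{\ell p_i:1\le\ell\le2\rho(m)\}$ are pairwise disjoint). Let $\bar\theta=2\rho(m)$. For each $i$ define $x^{\alpha_i}(t)$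 for $0\le t\le k-1$ by $x^{\alpha_i}(t)=1$ if $t=\beta_i+\ell p_i$ for some $0\le \ell\le\mu_i-1$ and $x^{\alpha_i}(t)=0$ otherwise, and for $t\ge k$ by $x^{\alpha_i}(t)=\mathbf 1\big[\sum_{j=1}^k \bar a_j x^{\alpha_i}(t-j)-\bar\theta\big]$. Let $h=\rho(m)k$. For $1\le f\le h$ let $b_f=\bar a_j$ if $f=\rho(m)j$ with $1\le j\le k$, and $b_f=0$ otherwise. Define $(y(n))_{n\ge0}$ by $y(\rho(m)j+i)=x^{\alpha_i}(1+j)$ for $0\le j\le k-1$, $0\le i\le\rho(m)-1$, and $y(n)=\mathbf 1\big[\sum_{f=1}^h b_f y(n-f)-\bar\theta\big]$ for $n\ge h$. Let $L_1(d)=\rho(m)\cdot\mathrm{lcm}(p_0,\dots,p_d)$ for $0\le d\le\rho(m)-1$ and $L_2=\rho(m)\cdot\mathrm{lcm}(p_0,\dots,p_{\rho(m)-1})$. For $0\le d\le\rho(m)-1$ let $B_0(d)=\{f\in\mathbb Z:\ 1\le f\le h-d,\ y(h+L_1(d)-\rho(m)-f)=1\}$, $B_{\ell+1}(d)=\{1+f: f\in B_\ell(d)\}$ for $\ell\ge0$, $A(d)=\bigcup_{\ell=0}^{d}B_\ell(d)$, and $Tot(d)=|B_0(d)|$. *)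

(* Defs.v *)
From HB Require Import structures.
From mathcomp Require Import all_boot all_order all_algebra.
Set Implicit Arguments. Unset Strict Implicit. Unset Printing Implicit Defensive.
Import Order.TTheory GRing.Theory Num.Theory.

(* The primes p with 2m < p < 3m, listed in decreasing order p_0 > p_1 > ... *)
Definition plist (m : nat) : seq nat :=
  rev [seq p <- iota (2 * m).+1 (3 * m - (2 * m).+1) | prime p].

Definition rho (m : nat) : nat := size (plist m).

Definition pr (m i : nat) : nat := nth 0 (plist m) i.

Definition alpha (m i : nat) : nat := 3 * m - pr m i.

Definition kk (m : nat) : nat := (6 * m - 1) * rho m.

Definition mu (m i : nat) : nat := kk m %/ pr m i.

Definition beta (m i : nat) : nat := kk m - pr m i * mu m i.

(* weight attached to the multiplier l in j = l * p_i *)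
Definition wgt (m l : nat) : int :=
  if ~~ odd (rho m) then
    (if l <= (3 * rho m) %/ 2 then Posz 2 else (- Posz 2)%R)
  else
    (if l <= (3 * rho m - 1) %/ 2 then Posz 2
     else if l <= 2 * rho m - 2 then (- Posz 2)%R else (- Posz 1)%R).

(* bar a_j: if j = l * p_i with 1 <= l <= 2 rho(m) (i unique, by disjointness),
   the weight of l; otherwise 0. *)
Definition abar (m j : nat) : int :=
  let good := fun p => (p %| j) && (1 <= j %/ p <= 2 * rho m) in
  let i := find good (plist m) in
  if i < rho m then wgt m (j %/ pr m i) else 0%R.

Definition thetabar (m : nat) : int := Posz (2 * rho m).

Definition ind (u : int) : nat := if (0 <= u)%R then 1 else 0.

(* First N values of the sequence with initial values init t for t < K and
   recursion z(t) = 1[ sum_{j=1}^K w_j z(t-j) - theta ] for t >= K. *)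
Definition lin_rec (init : nat -> nat) (K : nat) (w : nat -> int) (theta : int)
    (N : nat) : seq nat :=
  iter N (fun s =>
    let t := size s in
    rcons s (if t < K then init t
             else ind ((\sum_(1 <= j < K.+1) w j * Posz (nth 0 s (t - j))) - theta)%R))
    [::].

Definition x_init (m i t : nat) : nat :=
  if has (fun l => t == beta m i + l * pr m i) (iota 0 (mu m i)) then 1 else 0.

Definition x (m i t : nat) : nat :=
  nth 0 (lin_rec (x_init m i) (kk m) (abar m) (thetabar m) t.+1) t.

Definition hh (m : nat) : nat := rho m * kk m.

Definition b (m f : nat) : int :=
  if (rho m %| f) && (1 <= f %/ rho m <= kk m) then abar m (f %/ rho m) else 0%R.

Definition y_init (m n : nat) : nat := x m (n %% rho m) (1 + n %/ rho m).

Definition y (m n : nat) : nat :=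
  nth 0 (lin_rec (y_init m) (hh m) (b m) (thetabar m) n.+1) n.

Definition L1 (m d : nat) : nat := rho m * \big[lcmn/1]_(i < d.+1) pr m i.
Definition L2 (m : nat) : nat := rho m * \big[lcmn/1]_(i < rho m) pr m i.

Definition B0 (m d : nat) : seq nat :=
  [seq f <- iota 1 (hh m - d) | y m (hh m + L1 m d - rho m - f) == 1].

Definition Bl (m d l : nat) : seq nat := [seq l + f | f <- B0 m d].

Definition A (m d : nat) : seq nat := undup (flatten [seq Bl m d l | l <- iota 0 d.+1]).

Definition Tot (m d : nat) : nat := size (B0 m d).

(* Main.v *)
Require Import Defs.
From HB Require Import structures.
From mathcomp Require Import all_boot all_order all_algebra.
From mathcomp Require Import zify.
Set Implicit Arguments. Unset Strict Implicit. Unset Printing Implicit Defensive.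
Import Order.TTheory GRing.Theory Num.Theory.

Section LinRec.
Variables (init : nat -> nat) (K : nat) (w : nat -> int) (th : int).

Lemma lin_recS N : lin_rec init K w th N.+1 =
  rcons (lin_rec init K w th N)
   (let s := lin_rec init K w th N in let t := size s in
    if t < K then init t
    else ind ((\sum_(1 <= j < K.+1) w j * Posz (nth 0 s (t - j))) - th)%R).
Proof. by rewrite /lin_rec iterS. Qed.

Lemma size_lin_rec N : size (lin_rec init K w th N) = N.
Proof. by elim: N => [//|N IH]; rewrite lin_recS size_rcons IH. Qed.

Lemma nth_lin_rec N t : t < N ->
  nth 0 (lin_rec init K w th N) t = nth 0 (lin_rec init K w th t.+1) t.
Proof.
elim: N => [//|N IH] Ht.
case: (ltngtP t N) => [lt|gt|->]; last by [].
- by rewrite lin_recS nth_rcons size_lin_rec lt IH.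
- by move: Ht; rewrite ltnS leqNgt gt.
Qed.

Definition lval t := nth 0 (lin_rec init K w th t.+1) t.

Lemma lval_init t : t < K -> lval t = init t.
Proof. by move=> Ht; rewrite /lval lin_recS nth_rcons size_lin_rec ltnn eqxx /= size_lin_rec Ht. Qed.

Lemma lval_rec t : K <= t -> lval t =
  ind ((\sum_(1 <= j < K.+1) w j * Posz (lval (t - j))) - th)%R.
Proof.
move=> Ht; rewrite /lval lin_recS nth_rcons size_lin_rec ltnn eqxx /= size_lin_rec.
rewrite ltnNge Ht /=; congr (ind (_ - _)%R).
apply: eq_big_nat => j /andP[j1 jK]; congr (_ * Posz _)%R.
apply: nth_lin_rec; lia.
Qed.
End LinRec.

Lemma sum_pick (R : Type) (idx : R) (op : Monoid.com_law idx) a b c (F : nat -> R) :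
  a <= c < b -> \big[op/idx]_(a <= j < b) (if j == c then F j else idx) = F c.
Proof.
move=> /andP[ac cb].
rewrite (big_cat_nat _ (n:=c)) //=; last by apply: ltnW.
rewrite (big_ltn cb) eqxx.
have -> : \big[op/idx]_(a <= j < c) (if j == c then F j else idx) = idx.
  apply: big1_seq => j /andP[_]; rewrite mem_iota => /andP[_ jc].
  by rewrite (ltn_eqF (_ : j < c)) //; lia.
have -> : \big[op/idx]_(c.+1 <= j < b) (if j == c then F j else idx) = idx.
  apply: big1_seq => j /andP[_]; rewrite mem_iota => /andP[cj _].
  by rewrite (gtn_eqF (_ : c < j)) //.
by rewrite !Monoid.simpm.
Qed.

Lemma sum_pickn a b c (F : nat -> nat) :
  a <= c < b -> \sum_(a <= j < b) (if j == c then F j else 0) = F c.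
Proof. exact: sum_pick. Qed.

Lemma sum_pickz a b c (F : nat -> int) :
  a <= c < b -> (\sum_(a <= j < b) (if j == c then F j else 0) = F c)%R.
Proof. exact: sum_pick. Qed.

Lemma sum_le1 a b (Q : nat -> bool) :
  (forall g1 g2, a <= g1 -> g1 < g2 -> g2 < b -> Q g1 -> Q g2 -> False) ->
  \sum_(a <= g < b) Q g <= 1.
Proof.
elim: b => [|b IH] H; first by rewrite big_geq.
case: (leqP a b) => ab; last by rewrite big_geq.
rewrite big_nat_recr //=.
case Qb: (Q b); last by rewrite addn0; apply: IH => g1 g2 *; apply: (H g1 g2) => //; lia.
rewrite big1_seq //.
move=> g /andP[_]; rewrite mem_iota => /andP[ag gb].
case Qg: (Q g) => //; exfalso; apply: (H g b) => //; lia.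
Qed.

Lemma sum_split_one a b c (F : nat -> nat) : a <= c < b ->
  \sum_(a <= j < b) F j = F c + \sum_(a <= j < b) (if j == c then 0 else F j).
Proof.
move=> Hc; rewrite -(sum_pickn F Hc) -big_split /=.
by apply: eq_bigr => j _; case: (j == c); rewrite /= ?addn0.
Qed.

Lemma sum_pigeon R a b (Q : nat -> bool) : 0 < R ->
  (forall g1 g2, a <= g1 -> g1 < g2 -> g2 < b -> g1 %% R = g2 %% R -> Q g1 -> Q g2 -> False) ->
  \sum_(a <= g < b) Q g <= R.
Proof.
move=> R0 H.
have E : forall g, (Q g : nat) = \sum_(0 <= c < R) (if c == g %% R then (Q g : nat) else 0).
  move=> g; rewrite (sum_pickn (fun=> (Q g : nat))) //.
  by rewrite ltn_pmod.
rewrite (eq_bigr _ (fun g _ => E g)) exchange_big_nat /=.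
apply: leq_trans (_ : \sum_(0 <= c < R) 1 <= R); last by rewrite sum_nat_const_nat muln1 subn0.
apply: leq_sum => c _.
rewrite (eq_bigr (fun g => ((c == g %% R) && Q g : nat))); last first.
  by move=> g _; case: (c == g %% R).
apply: sum_le1 => g1 g2 ag1 g12 g2b /andP[/eqP c1 Q1] /andP[/eqP c2 Q2].
by apply: (H g1 g2) => //; rewrite -c1 -c2.
Qed.


Lemma mem_plist m p : (p \in plist m) = prime p && (2 * m < p < 3 * m).
Proof.
rewrite /plist mem_rev mem_filter mem_iota; congr (_ && _).
apply/idP/idP => /andP[h1 h2]; apply/andP; split; lia.
Qed.

Lemma uniq_plist m : uniq (plist m).
Proof. by rewrite /plist rev_uniq filter_uniq // iota_uniq. Qed.

Lemma pr_mem m i : i < rho m -> pr m i \in plist m.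
Proof. by move=> Hi; rewrite /pr mem_nth. Qed.

Lemma pr_prime m i : i < rho m -> prime (pr m i).
Proof. by move=> /pr_mem; rewrite mem_plist => /andP[]. Qed.

Lemma pr_lo m i : i < rho m -> 2 * m < pr m i.
Proof. by move=> /pr_mem; rewrite mem_plist => /and3P[]. Qed.

Lemma pr_hi m i : i < rho m -> pr m i < 3 * m.
Proof. by move=> /pr_mem; rewrite mem_plist => /and3P[]. Qed.

Lemma pr_inj m i j : i < rho m -> j < rho m -> pr m i = pr m j -> i = j.
Proof. move=> Hi Hj E; apply/eqP; rewrite -(nth_uniq 0 Hi Hj (uniq_plist m)); exact/eqP. Qed.

Lemma count_prime_iota n : forall a, 3 <= a -> count prime (iota a n) <= n.+1./2.
Proof.
elim: n {-2}n (leqnn n) => [|N IH] n Hn a Ha.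
  by move: Hn; rewrite leqn0 => /eqP->.
case: n Hn => [|[|n]] Hn //=.
  by case: (prime a).
have IHn := IH n (_ : n <= N) a.+2 (_ : 3 <= a.+2).
have H2 : (prime a : nat) + prime a.+1 <= 1.
  case pa: (prime a); case pa1: (prime a.+1) => //.
  case: (even_prime pa) => [a2|oa]; first by rewrite a2 in Ha.
  case: (even_prime pa1) => [a12|oa1]; first by move: Ha; rewrite -ltnS a12.
  by move: oa1; rewrite /= oa.
have E : n.+3./2 = n.+1./2 + 1 by rewrite addn1.
have E2 : (uphalf n).+1 = 1 + n.+1./2 by rewrite add1n.
rewrite E2 addnA; apply: leq_add => //.
by apply: IHn; lia.
Qed.

Lemma rho_le m : 2 * rho m <= m.
Proof.
case: m => [|m]; first by rewrite /rho /plist.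
have H := count_prime_iota (3 * m.+1 - (2 * m.+1).+1) (_ : 3 <= (2 * m.+1).+1).
rewrite /rho /plist size_rev size_filter.
apply: leq_trans (_ : 2 * (3 * m.+1 - (2 * m.+1).+1).+1./2 <= _).
  by rewrite leq_mul2l H ?orbT //; lia.
have -> : (3 * m.+1 - (2 * m.+1).+1).+1 = m.+1 by lia.
rewrite -[X in _ <= X](odd_double_half m.+1) mul2n; lia.
Qed.


Lemma pr_gt0 m i : i < rho m -> 0 < pr m i.
Proof. by move=> /pr_prime /prime_gt0. Qed.

Lemma rho_lt_pr m i : i < rho m -> 2 * rho m < pr m i.
Proof. move=> Hi; have := pr_lo Hi; have := rho_le m; lia. Qed.

Lemma noDiv m i i' l : i < rho m -> i' < rho m -> i != i' -> 0 < l <= 2 * rho m ->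
  ~~ (pr m i %| l * pr m i').
Proof.
move=> Hi Hi' ne /andP[l0 l2]; rewrite Euclid_dvdM ?pr_prime // negb_or.
apply/andP; split.
  apply/negP => /(dvdn_leq l0); have := rho_lt_pr Hi; lia.
rewrite dvdn_prime2 ?pr_prime //; apply/negP => /eqP E.
by move: ne; rewrite (pr_inj Hi Hi' E) eqxx.
Qed.

Lemma disj m i1 i2 l1 l2 : i1 < rho m -> i2 < rho m ->
  0 < l1 <= 2 * rho m -> 0 < l2 <= 2 * rho m -> l1 * pr m i1 = l2 * pr m i2 ->
  i1 = i2 /\ l1 = l2.
Proof.
move=> H1 H2 L1 L2 E.
case: (eqVneq i1 i2) => [e|ne].
  subst i2; split => //; apply/eqP; rewrite -(eqn_pmul2r (pr_gt0 H1)); exact/eqP.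
by move: (noDiv H1 H2 ne L2); rewrite -E dvdn_mull.
Qed.

Lemma abar_lP m i l : i < rho m -> 0 < l <= 2 * rho m -> abar m (l * pr m i) = wgt m l.
Proof.
move=> Hi Hl; rewrite /abar.
set good := fun p => _.
have gi : good (pr m i) by rewrite /good dvdn_mull // mulnK ?pr_gt0.
have hg : has good (plist m) by apply/hasP; exists (pr m i) => //; apply: pr_mem.
have fl : find good (plist m) < rho m by rewrite -has_find.
have := nth_find 0 hg; rewrite /good -/(pr m _) => /andP[dv rg].
have E : (l * pr m i %/ pr m (find good (plist m))) * pr m (find good (plist m)) = l * pr m i.
  by rewrite divnK.
have [fi _] := disj fl Hi rg Hl E.
by rewrite fl fi mulnK ?pr_gt0.
Qed.

Lemma abar_none m j : (forall i l, i < rho m -> 0 < l <= 2 * rho m -> j != l * pr m i) ->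
  abar m j = 0%R.
Proof.
move=> H; rewrite /abar.
set good := fun p => _.
case: (boolP (has good (plist m))) => hg.
  have fl : find good (plist m) < rho m by rewrite -has_find.
  have := nth_find 0 hg; rewrite /good -/(pr m _) => /andP[dv rg].
  by move: (H _ _ fl rg); rewrite divnK // eqxx.
by move: hg; rewrite has_find -/(rho m) => /negbTE ->.
Qed.

Lemma abar_dec m j : abar m j =
  (\sum_(0 <= i < rho m) \sum_(1 <= l < (2 * rho m)%N.+1)
     (if j == (l * pr m i)%N then wgt m l else 0))%R.
Proof.
case: (boolP [exists i : 'I_(rho m), exists l : 'I_(2 * rho m)%N.+1,
                 (0 < l) && (j == l * pr m i)]).
  move=> /existsP[[i Hi] /existsP[[l Hl] /andP[l0 /eqP ->]]] /=.
  have Hl' : 0 < l <= 2 * rho m by rewrite l0 -ltnS.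
  rewrite abar_lP //.
  rewrite (eq_big_nat _ _ (F2 := fun i' => if i' == i then wgt m l else 0%R)).
    by rewrite sum_pickz.
  move=> i' /andP[_ Hi'].
  case: (eqVneq i' i) => [->|ne].
    rewrite (eq_big_nat _ _ (F2 := fun l' => if l' == l then wgt m l' else 0%R)).
      by rewrite sum_pickz //; lia.
    move=> l' /andP[l'1 l'2]; rewrite eqn_pmul2r ?pr_gt0 //.
    by case: (l' =P l) => [->|]; rewrite ?eqxx // eq_sym => /eqP/negbTE ->.
  rewrite big1_seq // => l' /andP[_]; rewrite mem_iota => /andP[l'1 l'2].
  case: eqP => // E; exfalso.
  have Hl'' : 0 < l' <= 2 * rho m by apply/andP; split; lia.
  have [e _] := disj Hi Hi' Hl' Hl'' E.
  by move: ne; rewrite e eqxx.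
rewrite negb_exists => /forallP H.
rewrite abar_none.
  rewrite big1_seq // => i /andP[_]; rewrite mem_iota => /andP[_ Hi].
  rewrite big1_seq // => l /andP[_]; rewrite mem_iota => /andP[l1 l2].
  case: eqP => // E; exfalso.
  have l2' : l < (2 * rho m)%N.+1 by lia.
  have Hi' : i < rho m by lia.
  move: (H (Ordinal Hi')); rewrite negb_exists => /forallP /(_ (Ordinal l2')) /negP; apply.
  by rewrite /= E eqxx andbT.
move=> i l Hi /andP[l1 l2]; apply/negP => /eqP E.
have l2' : l < (2 * rho m)%N.+1 by lia.
move: (H (Ordinal Hi)); rewrite negb_exists => /forallP /(_ (Ordinal l2')) /negP; apply.
by rewrite /= E eqxx andbT.
Qed.


Lemma wgt_le2 m l : (wgt m l <= 2)%R.
Proof. by rewrite /wgt; repeat case: ifP. Qed.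

Lemma sum_const_z a b (c : int) (F : nat -> int) : a <= b ->
  (forall l, a <= l < b -> F l = c) -> (\sum_(a <= l < b) F l = c * (b - a)%:Z)%R.
Proof.
move=> ab H; rewrite (eq_big_nat _ _ H) sumr_const_nat.
by rewrite -mulr_natr natz.
Qed.

Lemma sum_wgt m : 2 <= rho m ->
  (\sum_(1 <= l < (2 * rho m)%N.+1) wgt m l = Posz (2 * rho m)%N)%R.
Proof.
move=> R2; rewrite /wgt; set R := rho m.
case: (boolP (odd R)) => oR /=.
  have [a Ea] : exists a, R = (2 * a).+1 by exists R./2; rewrite -{1}(odd_double_half R) oR add1n mul2n.
  have a1 : 1 <= a by lia.
  have e1 : (3 * R - 1) %/ 2 = 3 * a + 1.
    rewrite Ea (_ : 3 * (2 * a).+1 - 1 = (3 * a + 1) * 2); last by lia.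
    by rewrite mulnK.
  rewrite e1.
  rewrite (big_cat_nat _ (n := (3 * a + 1).+1)) /=; [|lia|lia].
  rewrite (big_cat_nat _ (n := (2 * R - 2).+1) (m := (3 * a + 1).+1)) /=; [|lia|lia].
  rewrite (sum_const_z (c := 2)); [|lia|by move=> l /andP[_ H]; rewrite ifT //; lia].
  rewrite (sum_const_z (c := -2)); [|lia|by move=> l /andP[H1 H2]; rewrite ifF ?ifT //; lia].
  rewrite (sum_const_z (c := -1)); [|lia|by move=> l /andP[H1 H2]; rewrite ifF ?ifF //; lia].
  lia.
have [a Ea] : exists a, R = 2 * a by exists R./2; rewrite -{1}(odd_double_half R) (negbTE oR) add0n mul2n.
have e1 : (3 * R) %/ 2 = 3 * a by rewrite Ea (_ : 3 * (2 * a) = 3 * a * 2) ?mulnK //; lia.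
rewrite e1 (big_cat_nat _ (n := (3 * a).+1)) /=; [|lia|lia].
rewrite (sum_const_z (c := 2)); [|lia|by move=> l /andP[_ H]; rewrite ifT //; lia].
rewrite (sum_const_z (c := -2)); [|lia|by move=> l /andP[H1 H2]; rewrite ifF //; lia].
lia.
Qed.

Lemma lP_le_K m i l : i < rho m -> 0 < l <= 2 * rho m -> 0 < l * pr m i <= kk m.
Proof.
move=> Hi /andP[l0 l2]; have p0 := pr_gt0 Hi; have ph := pr_hi Hi.
rewrite muln_gt0 l0 p0 /= /kk.
have h1 : l * pr m i <= 2 * rho m * pr m i by rewrite leq_mul2r l2 orbT.
have h2 : 2 * rho m * pr m i <= 2 * rho m * (3 * m - 1) by rewrite leq_mul2l; apply/orP; right; lia.
apply: (leq_trans h1); apply: (leq_trans h2).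
nia.
Qed.

Lemma abar_sum m (z : nat -> int) :
  (\sum_(1 <= j < (kk m).+1) abar m j * z j =
   \sum_(0 <= i < rho m) \sum_(1 <= l < (2 * rho m)%N.+1) wgt m l * z (l * pr m i)%N)%R.
Proof.
under eq_bigr => j _ do rewrite abar_dec mulr_suml.
rewrite exchange_big_nat /=; apply: eq_big_nat => i /andP[_ Hi].
under eq_bigr => j _ do rewrite mulr_suml.
rewrite exchange_big_nat /=; apply: eq_big_nat => l /andP[l1 l2].
have Hl : 0 < l <= 2 * rho m by apply/andP; split; lia.
rewrite -(@sum_pickz 1 (kk m).+1 (l * pr m i) (fun j => wgt m l * z j)%R).
  by apply: eq_bigr => j _; case: eqP => // _; rewrite mul0r.
have := lP_le_K Hi Hl; lia.
Qed.

Lemma b_dec m f : b m f =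
  (\sum_(0 <= i < rho m) \sum_(1 <= l < (2 * rho m)%N.+1)
     (if f == (rho m * (l * pr m i))%N then wgt m l else 0))%R.
Proof.
rewrite /b; case: ifP => [/andP[dv rg]|nb].
  have R0 : 0 < rho m by move: rg; case: (rho m) => //; rewrite divn0.
  rewrite abar_dec; apply: eq_big_nat => i /andP[_ Hi]; apply: eq_big_nat => l _.
  have -> : (f == rho m * (l * pr m i)) = (f %/ rho m == l * pr m i).
    by rewrite -{1}(divnK dv) mulnC eqn_pmul2l.
  by [].
symmetry; rewrite big1_seq // => i /andP[_]; rewrite mem_iota => /andP[_ Hi].
rewrite big1_seq // => l /andP[_]; rewrite mem_iota => /andP[l1 l2].
case: eqP => // E; exfalso; move: nb; rewrite E dvdn_mulr // mulKn.
  have Hl : 0 < l <= 2 * rho m by apply/andP; split; lia.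
  have Hi' : i < rho m by lia.
  by have := lP_le_K Hi' Hl; rewrite /= => ->.
by move: Hi; case: (rho m).
Qed.

Lemma b_sum m (z : nat -> int) :
  (\sum_(1 <= f < (hh m).+1) b m f * z f =
   \sum_(0 <= i < rho m) \sum_(1 <= l < (2 * rho m)%N.+1)
      wgt m l * z (rho m * (l * pr m i))%N)%R.
Proof.
under eq_bigr => j _ do rewrite b_dec mulr_suml.
rewrite exchange_big_nat /=; apply: eq_big_nat => i /andP[_ Hi].
under eq_bigr => j _ do rewrite mulr_suml.
rewrite exchange_big_nat /=; apply: eq_big_nat => l /andP[l1 l2].
have Hl : 0 < l <= 2 * rho m by apply/andP; split; lia.
rewrite -(@sum_pickz 1 (hh m).+1 (rho m * (l * pr m i)) (fun j => wgt m l * z j)%R).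
  by apply: eq_bigr => j _; case: eqP => // _; rewrite mul0r.
have := lP_le_K Hi Hl; rewrite /hh; nia.
Qed.


Lemma sum_split_onez a b c (F : nat -> int) : a <= c < b ->
  (\sum_(a <= j < b) F j = F c + \sum_(a <= j < b) (if j == c then 0 else F j))%R.
Proof.
move=> Hc; rewrite -(sum_pickz F Hc) -big_split /=.
by apply: eq_bigr => j _; case: (j == c); rewrite /= ?addr0 ?add0r.
Qed.

Lemma Posz_sum a b (F : nat -> nat) : Posz (\sum_(a <= l < b) F l) = (\sum_(a <= l < b) Posz (F l))%R.
Proof. by rewrite (big_morph Posz PoszD (erefl (Posz 0))). Qed.

Lemma mod_sub_mul j x p e : x * p <= j -> (j - x * p + e) %% p = (j + e) %% p.
Proof.
move=> H; have -> : j + e = (j - x * p + e) + x * p by lia.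
by rewrite [in RHS]addnC modnMDl.
Qed.

Lemma mod_cancel x y z p : x + y = z %[mod p] -> x = z %[mod p] -> p %| y.
Proof.
move=> H1 H2; have : x + y = x + 0 %[mod p] by rewrite addn0 H1 H2.
by move/eqP; rewrite eqn_modDl mod0n.
Qed.

Lemma periodic m i e (u : nat -> nat) : 2 <= rho m -> i < rho m ->
  (forall j, j < kk m -> u j = ((j + e) %% pr m i == kk m %% pr m i)) ->
  (forall j, kk m <= j -> u j = ind ((\sum_(0 <= i' < rho m) \sum_(1 <= l < (2 * rho m)%N.+1)
        wgt m l * Posz (u (j - l * pr m i')%N)) - thetabar m)%R) ->
  forall j, u j = ((j + e) %% pr m i == kk m %% pr m i).
Proof.
move=> R2 Hi Hinit Hrec.
elim/ltn_ind => j IH.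
case: (ltnP j (kk m)) => jK; first exact: Hinit.
rewrite Hrec //.
set p := pr m i.
have p0 : 0 < p := pr_gt0 Hi.
have HlP : forall i' l, i' < rho m -> 0 < l <= 2 * rho m -> 0 < l * pr m i' <= j.
  move=> i' l Hi' Hl; have := lP_le_K Hi' Hl; lia.
have E1 : forall i', 0 <= i' < rho m ->
  (\sum_(1 <= l < (2 * rho m)%N.+1) wgt m l * Posz (u (j - l * pr m i')%N) =
   \sum_(1 <= l < (2 * rho m)%N.+1) wgt m l * Posz ((j - l * pr m i' + e) %% p == kk m %% p)%N)%R.
  move=> i' /andP[_ Hi']; apply: eq_big_nat => l /andP[l1 l2].
  have Hl : 0 < l <= 2 * rho m by apply/andP; split; lia.
  have := HlP _ _ Hi' Hl => H; rewrite IH //; lia.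
rewrite (eq_big_nat _ _ E1) (sum_split_onez _ (c := i)) /=; last exact: Hi.
have Ei : (\sum_(1 <= l < (2 * rho m)%N.+1) wgt m l * Posz ((j - l * pr m i + e) %% p == kk m %% p)%N
   = Posz ((j + e) %% p == kk m %% p)%N * Posz (2 * rho m)%N)%R.
  rewrite -sum_wgt // mulr_sumr; apply: eq_big_nat => l /andP[l1 l2].
  have Hl : 0 < l <= 2 * rho m by apply/andP; split; lia.
  rewrite mod_sub_mul; first by rewrite mulrC.
  by case/andP: (HlP _ _ Hi Hl).
rewrite Ei.
set T := (j + e) %% p == kk m %% p.
case: (boolP T) => HT.
  rewrite big1_seq; last first.
    move=> i' /andP[_]; rewrite mem_iota => /andP[_ Hi'].
    case: eqP => // /eqP ne; rewrite big1_seq // => l /andP[_]; rewrite mem_iota => /andP[l1 l2].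
    have Hl : 0 < l <= 2 * rho m by apply/andP; split; lia.
    have Hi'' : i' < rho m by lia.
    case: eqP => [|_]; last by rewrite mulr0.
    move=> /eqP E; exfalso.
    have := noDiv Hi Hi'' (_ : i != i') Hl; rewrite eq_sym ne => /(_ isT) /negP; apply.
    have [H1 H2] := andP (HlP _ _ Hi'' Hl).
    apply: (mod_cancel (x := j - l * pr m i' + e) (z := kk m)); last exact/eqP.
    have -> : j - l * pr m i' + e + l * pr m i' = j + e by lia.
    exact/eqP.
  by rewrite /ind /thetabar mul1r addr0 subrr.
rewrite mul0r add0r /ind /thetabar.
case: ifP => // H; exfalso; move: H; apply/negP; rewrite -ltNge subr_lt0.
apply: (le_lt_trans (y := (\sum_(0 <= i' < rho m) (if i' == i then 0 else Posz 2))%R)).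
  apply: ler_sum_nat => i' /andP[_ Hi']; case: eqP => // /eqP ne.
  apply: (le_trans (y := (2 * Posz (\sum_(1 <= l < (2 * rho m).+1)
            ((j - l * pr m i' + e) %% p == kk m %% p))%N)%R)).
    rewrite Posz_sum mulr_sumr; apply: ler_sum_nat => l _.
    apply: ler_wpM2r; [by case: eqP | exact: wgt_le2].
  have : \sum_(1 <= l < (2 * rho m)%N.+1) ((j - l * pr m i' + e) %% p == kk m %% p) <= 1.
    apply: sum_le1 => l1 l2 h1 h12 h2 /eqP E1' /eqP E2'.
    have Hl1 : 0 < l1 <= 2 * rho m by apply/andP; split; lia.
    have Hl2 : 0 < l2 <= 2 * rho m by apply/andP; split; lia.
    have [a1 b1] := andP (HlP _ _ Hi' Hl1).
    have [a2 b2] := andP (HlP _ _ Hi' Hl2).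
    have : (j - l2 * pr m i' + e) + (l2 - l1) * pr m i' = j - l1 * pr m i' + e.
      rewrite mulnBl; have : l1 * pr m i' <= l2 * pr m i' by rewrite leq_mul2r ltnW ?orbT.
      lia.
    move=> E3; have : p %| (l2 - l1) * pr m i'.
      apply: (mod_cancel (x := j - l2 * pr m i' + e) (z := kk m)); last exact: E2'.
      by rewrite E3.
    apply/negP; rewrite Euclid_dvdM ?pr_prime // negb_or; apply/andP; split.
      have d0 : 0 < l2 - l1 by lia.
      apply/negP => /(dvdn_leq d0) H.
      have := rho_lt_pr Hi; rewrite -/p; lia.
    rewrite dvdn_prime2 ?pr_prime //; apply/negP => /eqP E.
    by move: ne; rewrite -(pr_inj Hi Hi' E) eqxx.
  by case: (\sum_(_ <= _ < _) _) => [|[|]].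
have Hi0 : 0 <= i < rho m by rewrite Hi.
have H2 := @sum_split_one 0 (rho m) i (fun=> 2) Hi0.
rewrite sum_nat_const_nat /= in H2.
have -> : (\sum_(0 <= i' < rho m) (if i' == i then 0 else Posz 2))%R =
          Posz (\sum_(0 <= i' < rho m) (if i' == i then 0 else 2)).
  by rewrite Posz_sum; apply: eq_bigr => i' _; case: eqP.
rewrite ltz_nat; lia.
Qed.


Lemma x_init_char m i j : i < rho m -> j < kk m ->
  x_init m i j = (j %% pr m i == kk m %% pr m i).
Proof.
move=> Hi jK; have p0 := pr_gt0 Hi.
rewrite /x_init /beta /mu.
set p := pr m i; set K := kk m.
have EK := divn_eq K p; have rK := ltn_pmod K p0.
have Eb : K - p * (K %/ p) = K %% p by lia.
rewrite Eb.
case: (boolP (has _ _)) => [/hasP[l] | /hasP H].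
  rewrite mem_iota => /andP[_ lmu] /eqP ->.
  by rewrite addnC modnMDl modn_mod eqxx.
case: eqP => // E; exfalso; apply: H.
exists (j %/ p).
  rewrite mem_iota add0n.
  have Ej := divn_eq j p.
  have : j %/ p * p < K %/ p * p by lia.
  by rewrite ltn_pmul2r.
by apply/eqP; rewrite {1}(divn_eq j p) E addnC.
Qed.

Lemma x_char m i t : 2 <= rho m -> i < rho m ->
  x m i t = (t %% pr m i == kk m %% pr m i).
Proof.
move=> R2 Hi.
suff H : forall j, x m i j = ((j + 0) %% pr m i == kk m %% pr m i) by rewrite H addn0.
apply: periodic => //.
  move=> j jK; rewrite addn0 /x -/(lval _ _ _ _ j) lval_init //; exact: x_init_char.
move=> j jK; rewrite /x -/(lval _ _ _ _ j) lval_rec //.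
by rewrite (abar_sum m (fun j' => Posz (lval (x_init m i) (kk m) (abar m) (thetabar m) (j - j')))).
Qed.

Lemma rho_gt0 m : 2 <= rho m -> 0 < rho m.
Proof. lia. Qed.

Lemma y_class m i j : 2 <= rho m -> i < rho m ->
  y m (rho m * j + i) = ((j + 1) %% pr m i == kk m %% pr m i).
Proof.
move=> R2 Hi; have R0 := rho_gt0 R2.
have Em : forall j', (rho m * j' + i) %% rho m = i.
  by move=> j'; rewrite mulnC modnMDl modn_small.
have Ed : forall j', (rho m * j' + i) %/ rho m = j'.
  by move=> j'; rewrite mulnC divnMDl // divn_small // addn0.
apply: (@periodic m i 1 (fun j => y m (rho m * j + i)) R2 Hi).
  move=> j' jK; rewrite /y -/(lval _ _ _ _ _) lval_init; last first.
    rewrite /hh; have : rho m * j' + i < rho m * j'.+1 by rewrite mulnS; lia.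
    move=> H; apply: (leq_trans H); rewrite leq_mul2l; apply/orP; right; exact: jK.
  by rewrite /y_init Em Ed x_char // addnC.
move=> j' jK; rewrite /y -/(lval _ _ _ _ _) lval_rec; last first.
  rewrite /hh; have : rho m * kk m <= rho m * j' by rewrite leq_mul2l jK orbT.
  lia.
rewrite (b_sum m (fun f => Posz (lval (y_init m) (hh m) (b m) (thetabar m) (rho m * j' + i - f)))).
congr (ind (_ - _)); apply: eq_big_nat => i' /andP[_ Hi']; apply: eq_big_nat => l /andP[l1 l2].
have Hl : 0 < l <= 2 * rho m by apply/andP; split; lia.
have := lP_le_K Hi' Hl => /andP[_ H].
have -> : rho m * j' + i - rho m * (l * pr m i') = rho m * (j' - l * pr m i') + i.
  rewrite mulnBr; have : rho m * (l * pr m i') <= rho m * j'.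
    by rewrite leq_mul2l (leq_trans H jK) orbT.
  lia.
by [].
Qed.

Lemma y_char m v : 2 <= rho m ->
  y m v = ((v %/ rho m + 1) %% pr m (v %% rho m) == kk m %% pr m (v %% rho m)).
Proof.
move=> R2; have R0 := rho_gt0 R2.
rewrite {1}(divn_eq v (rho m)) mulnC y_class //; exact: ltn_pmod.
Qed.


Definition W m i v := v == rho m * (kk m - 1) + i %[mod rho m * pr m i].

Lemma kk_gt0 m : 2 <= rho m -> 0 < kk m.
Proof. move=> R2; have := rho_le m; rewrite /kk; nia. Qed.

Lemma W_cls m i v : i < rho m -> W m i v -> v %% rho m = i.
Proof.
move=> Hi /eqP E.
have : (v %% (rho m * pr m i)) %% rho m = ((rho m * (kk m - 1) + i) %% (rho m * pr m i)) %% rho m.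
  by rewrite E.
rewrite !modn_dvdm ?dvdn_mulr // => ->.
by rewrite mulnC modnMDl modn_small.
Qed.

Lemma y_W m v : 2 <= rho m -> y m v = W m (v %% rho m) v.
Proof.
move=> R2; have R0 := rho_gt0 R2; have K0 := kk_gt0 R2.
rewrite y_char //; congr nat_of_bool.
set i := v %% rho m; have Hi : i < rho m by exact: ltn_pmod.
rewrite /W {2}(divn_eq v (rho m)) -/i mulnC eqn_modDr.
rewrite -!muln_modr eqn_pmul2l //.
by rewrite -(eqn_modDr 1 (v %/ rho m)) subnK.
Qed.

Lemma y_sumW m v : 2 <= rho m -> y m v = \sum_(0 <= i < rho m) W m i v.
Proof.
move=> R2; have R0 := rho_gt0 R2.
rewrite y_W // (sum_split_one _ (c := v %% rho m)); last by rewrite ltn_pmod.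
rewrite big1_seq ?addn0 // => i /andP[_]; rewrite mem_iota => /andP[_ Hi].
case: eqP => // /eqP ne.
case Wi: (W m i v) => //; exfalso.
by move: ne; rewrite -(W_cls _ Wi) ?eqxx //; lia.
Qed.

Lemma y_le1 m v : 2 <= rho m -> y m v <= 1.
Proof. by move=> R2; rewrite y_W //; case: (W _ _ _). Qed.


Lemma sum_ge_term a b c (F : nat -> nat) : a <= c < b -> F c <= \sum_(a <= j < b) F j.
Proof. by move=> H; rewrite (sum_split_one _ H) leq_addr. Qed.

Lemma modsub q a b g : g <= a -> g <= b -> (a - g == b - g %[mod q]) = (a == b %[mod q]).
Proof. by move=> ga gb; rewrite -(eqn_modDr g) !subnK. Qed.

Lemma modsub2 q a g1 g2 : g1 <= a -> g2 <= a -> (a - g1 == a - g2 %[mod q]) = (g1 == g2 %[mod q]).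
Proof.
move=> h1 h2; rewrite -(eqn_modDr (g1 + g2)).
have -> : a - g1 + (g1 + g2) = a + g2 by lia.
have -> : a - g2 + (g1 + g2) = a + g1 by lia.
by rewrite eqn_modDl eq_sym.
Qed.

Lemma AP_block N c s a : 0 < s -> a + s <= N.+1 ->
  1 <= \sum_(a <= f < a + s) (N - f == c %[mod s]).
Proof.
move=> s0 H.
set u := N - a; set c' := c %% s.
have c's : c' < s by exact: ltn_pmod.
have Eu := divn_eq (u + s - c') s.
set q := (u + s - c') %/ s in Eu; set r := (u + s - c') %% s in Eu.
have rs : r < s by exact: ltn_pmod.
have q1 : 1 <= q.
  case: q Eu => [|q'] //=; lia.
have qs : s <= q * s by rewrite leq_pmull.
apply: (leq_trans _ (sum_ge_term (fun f => (N - f == c %[mod s]) : nat) (_ : a <= a + r < a + s))); last by lia.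
have -> : N - (a + r) = (q - 1) * s + c' by rewrite mulnBl; lia.
by rewrite modnMDl /c' modn_mod eqxx.
Qed.

Lemma AP_count N c s : 0 < s -> forall q a, a + q * s <= N.+1 ->
  q <= \sum_(a <= f < a + q * s) (N - f == c %[mod s]).
Proof.
move=> s0; elim=> [//|q IH] a H.
rewrite (big_cat_nat _ (n := a + s)) /=; [|lia|]; last by rewrite mulSn; lia.
have -> : a + q.+1 * s = (a + s) + q * s by rewrite mulSn; lia.
rewrite -addn1 addnC; apply: leq_add.
  apply: AP_block => //; rewrite mulSn in H; lia.
by apply: IH; rewrite mulSn in H; lia.
Qed.

Lemma K_lt_PP m i i' : 2 <= rho m -> i < rho m -> i' < rho m -> kk m < pr m i * pr m i'.
Proof.
move=> R2 Hi Hi'; have := rho_le m; have := pr_lo Hi; have := pr_lo Hi'.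
move=> h1 h2 h3.
have : (2 * m).+1 * (2 * m).+1 <= pr m i * pr m i' by apply: leq_mul; lia.
rewrite /kk; nia.
Qed.

Lemma crt m i i' al be g1 g2 : 2 <= rho m -> i < rho m -> i' < rho m -> i != i' ->
  g1 < g2 -> g2 <= hh m -> g2 <= al -> g2 <= be ->
  W m i (al - g1) -> W m i (al - g2) -> W m i' (be - g1) -> W m i' (be - g2) -> False.
Proof.
move=> R2 Hi Hi' ne g12 g2h g2a g2b W1 W2 W3 W4.
have R0 := rho_gt0 R2.
have g1a : g1 <= al by apply: leq_trans (ltnW g12) g2a.
have g1b : g1 <= be by apply: leq_trans (ltnW g12) g2b.
have D1 : rho m * pr m i %| g2 - g1.
  rewrite -(eqn_mod_dvd _ (ltnW g12)) eq_sym -(modsub2 _ g1a g2a).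
  by rewrite (eqP W1) (eqP W2).
have D2 : rho m * pr m i' %| g2 - g1.
  rewrite -(eqn_mod_dvd _ (ltnW g12)) eq_sym -(modsub2 _ g1b g2b).
  by rewrite (eqP W3) (eqP W4).
have DR : rho m %| g2 - g1 by apply: dvdn_trans D1; apply: dvdn_mulr.
have Eq := divnK DR; set q := (g2 - g1) %/ rho m in Eq.
rewrite -Eq [q * _]mulnC dvdn_pmul2l // in D1.
rewrite -Eq [q * _]mulnC dvdn_pmul2l // in D2.
have cop : coprime (pr m i) (pr m i').
  rewrite prime_coprime ?pr_prime // dvdn_prime2 ?pr_prime //.
  by apply/negP => /eqP E; move: ne; rewrite (pr_inj Hi Hi' E) eqxx.
have PPq : pr m i * pr m i' %| q by rewrite Gauss_dvd // D1 D2.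
have D0 : 0 < g2 - g1 by rewrite subn_gt0.
have q0 : 0 < q by move: D0; rewrite -Eq muln_gt0 => /andP[].
have Hq := dvdn_leq q0 PPq.
have KP := K_lt_PP R2 Hi Hi'.
have Dh : g2 - g1 <= hh m by apply: leq_trans (leq_subr _ _) g2h.
move: Dh; rewrite -Eq /hh [q * _]mulnC leq_mul2l eqn0Ngt R0 /= => qK.
have := leq_ltn_trans qK KP; rewrite ltnNge Hq //.
Qed.


Lemma memB0 m d f : (f \in B0 m d) =
  (1 <= f <= hh m - d) && (y m (hh m + L1 m d - rho m - f) == 1).
Proof.
rewrite /B0 mem_filter mem_iota andbC; congr (_ && _).
Qed.

Lemma memA m d g : reflect (exists l, l <= d /\ exists2 f, f \in B0 m d & g = l + f) (g \in A m d).
Proof.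
rewrite /A mem_undup; apply: (iffP flattenP).
  move=> [s /mapP[l]]; rewrite mem_iota => /andP[_ ld] -> /mapP[f fB ->].
  by exists l; split; [lia | exists f].
move=> [l [ld [f fB ->]]]; exists (Bl m d l).
  by apply/mapP; exists l => //; rewrite mem_iota; apply/andP; split; lia.
by apply/mapP; exists f.
Qed.

Lemma A_range m d g : d <= hh m -> g \in A m d -> 1 <= g <= hh m.
Proof.
move=> dh /memA[l [ld [f]]]; rewrite memB0 => /andP[/andP[f1 f2] _] ->.
apply/andP; split; lia.
Qed.

Lemma sum_seq_iota (s : seq nat) a k (F : nat -> nat) : uniq s ->
  (forall x, x \in s -> a <= x < a + k) ->
  \sum_(x <- s) F x = \sum_(a <= x < a + k) (x \in s) * F x.
Proof.
move=> us sr.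
have P : perm_eq s [seq x <- iota a k | x \in s].
  apply: uniq_perm => //; first by rewrite filter_uniq // iota_uniq.
  move=> x; rewrite mem_filter mem_iota; case xs: (x \in s) => //=.
  by rewrite sr.
rewrite (perm_big _ P) big_filter /index_iota (_ : a + k - a = k); last by lia.
rewrite big_mkcond /=; apply: eq_bigr => x _.
by case: (x \in s); rewrite ?mul1n ?mul0n.
Qed.

Lemma A_sum m d n : d <= hh m ->
  \sum_(f <- A m d) y m (n - f) = \sum_(1 <= g < (hh m).+1) (g \in A m d) * y m (n - g).
Proof.
move=> dh; rewrite (sum_seq_iota (k := hh m) (a := 1)) ?undup_uniq //.
by move=> x /(A_range dh) /andP[h1 h2]; apply/andP; split; lia.
Qed.

Lemma size_filter_sum (s : seq nat) (p : pred nat) : size (filter p s) = \sum_(x <- s) p x.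
Proof. by elim: s => [|x s IH]; rewrite ?big_nil // big_cons /=; case: (p x); rewrite /= IH. Qed.

Lemma eq1_le1 v : v <= 1 -> (v == 1 : nat) = v.
Proof. by case: v => [|[|]]. Qed.

Lemma Tot_sum m d : 2 <= rho m -> d <= hh m ->
  Tot m d = \sum_(1 <= f < (hh m - d).+1) y m (hh m + L1 m d - rho m - f).
Proof.
move=> R2 dh; rewrite /Tot /B0 size_filter_sum /index_iota subSS subn0.
by apply: eq_bigr => f _; rewrite eq1_le1 // y_le1.
Qed.

Lemma memA_le m d g : 2 <= rho m -> d <= hh m ->
  (g \in A m d : nat) <= \sum_(0 <= l < d.+1)
     ((l < g) && (g - l <= hh m - d)) * y m (hh m + L1 m d - rho m + l - g).
Proof.
move=> R2 dh; case: (boolP (g \in A m d)) => [/memA[l [ld [f fB Eg]]]|] //=.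
move: fB; rewrite memB0 => /andP[/andP[f1 f2] /eqP yf].
apply: leq_trans (sum_ge_term (fun l => ((l < g) && (g - l <= hh m - d)) *
    y m (hh m + L1 m d - rho m + l - g)) (_ : 0 <= l < d.+1)); last by lia.
have -> : (l < g) && (g - l <= hh m - d) by apply/andP; split; lia.
by rewrite mul1n (_ : hh m + L1 m d - rho m + l - g = hh m + L1 m d - rho m - f) ?yf //; lia.
Qed.


Definition NN m d := hh m + L1 m d - rho m.

Lemma L1_ge m d : d < rho m -> rho m <= L1 m d.
Proof.
move=> dR; rewrite /L1 -{1}[rho m]muln1 leq_mul2l; apply/orP; right.
apply: (big_ind (fun x => 0 < x)) => //.
  by move=> x y hx hy; rewrite lcmn_gt0 hx hy.
move=> i _; apply: pr_gt0; have := ltn_ord i; lia.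
Qed.

Lemma NN_ge m d : d < rho m -> hh m <= NN m d.
Proof. move=> dR; have := L1_ge dR; rewrite /NN; lia. Qed.

Lemma NN_mod m d : d < rho m -> rho m %| NN m d.
Proof.
move=> dR; rewrite /NN; apply: dvdn_sub => //.
by apply: dvdn_add; [apply: dvdn_mulr | apply: dvdn_mulr].
Qed.

Lemma sum_le1n a b (F : nat -> nat) : (forall g, F g <= 1) ->
  (forall g1 g2, a <= g1 -> g1 < g2 -> g2 < b -> 0 < F g1 -> 0 < F g2 -> False) ->
  \sum_(a <= g < b) F g <= 1.
Proof.
move=> F1 H; rewrite (eq_bigr (fun g => (0 < F g : nat))); first exact: sum_le1.
by move=> g _; have := F1 g; case: (F g) => [|[|]].
Qed.

Lemma sum_pigeon_n R a b (F : nat -> nat) : 0 < R -> (forall g, F g <= 1) ->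
  (forall g1 g2, a <= g1 -> g1 < g2 -> g2 < b -> g1 %% R = g2 %% R -> 0 < F g1 -> 0 < F g2 -> False) ->
  \sum_(a <= g < b) F g <= R.
Proof.
move=> R0 F1 H; rewrite (eq_bigr (fun g => (0 < F g : nat))); first exact: sum_pigeon.
by move=> g _; have := F1 g; case: (F g) => [|[|]].
Qed.

Lemma sum_le_len a b (F : nat -> nat) : (forall g, F g <= 1) -> \sum_(a <= g < b) F g <= b - a.
Proof.
move=> F1; apply: leq_trans (_ : \sum_(a <= g < b) 1 <= _); first by apply: leq_sum.
by rewrite sum_nat_const_nat muln1.
Qed.

Lemma W_le1 m i v : (W m i v : nat) <= 1. Proof. by case: (W _ _ _). Qed.

Lemma contribA m d (Z : nat -> nat) : 2 <= rho m -> d <= hh m ->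
  \sum_(1 <= g < (hh m).+1) (g \in A m d) * Z g <=
  \sum_(0 <= l < d.+1) \sum_(1 <= g < (hh m).+1)
     ((l < g) && (g - l <= hh m - d)) * y m (NN m d + l - g) * Z g.
Proof.
move=> R2 dh.
apply: leq_trans (_ : \sum_(1 <= g < (hh m).+1) (\sum_(0 <= l < d.+1)
     ((l < g) && (g - l <= hh m - d)) * y m (NN m d + l - g)) * Z g <= _).
  by apply: leq_sum => g _; rewrite leq_mul2r (memA_le g R2 dh) orbT.
under eq_bigr => g _ do rewrite big_distrl.
by rewrite exchange_big_nat.
Qed.

Lemma split3 (F : nat -> nat) N h d l0 : l0 <= d -> d <= h ->
  \sum_(1 <= g < h.+1) F (N + l0 - g) =
  \sum_(1 <= g < l0.+1) F (N + l0 - g) + \sum_(1 <= f < (h - d).+1) F (N - f)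
  + \sum_((l0 + (h - d)).+1 <= g < h.+1) F (N + l0 - g).
Proof.
move=> ld dh.
rewrite (big_cat_nat _ (n := l0.+1)) /=; [|lia|lia].
rewrite (big_cat_nat _ (n := (l0 + (h - d)).+1) (m := l0.+1)) /=; [|lia|lia].
rewrite addnA; congr (_ + _ + _).
rewrite -[l0.+1]add1n big_addn (_ : (l0 + (h - d)).+1 - l0 = (h - d).+1); last by lia.
by apply: eq_big_nat => f _; rewrite subnDr.
Qed.


Lemma leq_sum_nat a b (F G : nat -> nat) : (forall i, a <= i < b -> F i <= G i) ->
  \sum_(a <= i < b) F i <= \sum_(a <= i < b) G i.
Proof. by move=> H; rewrite big_nat_cond [X in _ <= X]big_nat_cond; apply: leq_sum => i /andP[]; auto. Qed.

Lemma hh_ge m d : 2 <= rho m -> d < rho m -> d <= hh m.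
Proof. move=> R2 dR; have := kk_gt0 R2; rewrite /hh; nia. Qed.

Lemma C_ge m d i : 2 <= rho m -> d < rho m -> i < rho m ->
  2 * rho m <= \sum_(1 <= f < (hh m - d).+1) W m i (NN m d - f).
Proof.
move=> R2 dR Hi.
set s := rho m * pr m i.
have s0 : 0 < s by rewrite muln_gt0 rho_gt0 // pr_gt0.
have Hb : 2 * rho m * s <= hh m - d.
  have h1 : 2 * rho m * s <= 2 * rho m * (rho m * (3 * m - 1)).
    rewrite leq_mul2l; apply/orP; right; rewrite leq_mul2l; apply/orP; right.
    have := pr_hi Hi; lia.
  apply: (leq_trans h1); rewrite /hh /kk.
  have : rho m <= rho m * rho m by rewrite leq_pmulr ?rho_gt0.
  nia.
have HN := NN_ge dR.
have Hc : 1 + 2 * rho m * s <= (NN m d).+1 by lia.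
have H := @AP_count (NN m d) (rho m * (kk m - 1) + i) s s0 (2 * rho m) 1 Hc.
apply: (leq_trans H).
rewrite [X in _ <= X](big_cat_nat _ (n := 1 + 2 * rho m * s)) /=; [|lia|lia].
exact: leq_addr.
Qed.

Lemma G_ge m d i l0 : 2 <= rho m -> d < rho m -> i < rho m -> l0 <= d ->
  2 * rho m <= \sum_(1 <= g < (hh m).+1) W m i (NN m d + l0 - g).
Proof.
move=> R2 dR Hi ld.
rewrite (split3 (W m i) (NN m d) ld (hh_ge R2 dR)).
apply: leq_trans (C_ge R2 dR Hi) _; rewrite -addnA addnC -addnA; exact: leq_addr.
Qed.

Lemma sumG_le m d l0 : 2 <= rho m -> d < rho m -> l0 <= d ->
  \sum_(1 <= g < (hh m).+1) y m (NN m d + l0 - g) <= Tot m d + d.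
Proof.
move=> R2 dR ld.
have dh := hh_ge R2 dR.
rewrite (split3 (y m) (NN m d) ld dh) (Tot_sum R2 dh).
have h1 := @sum_le_len 1 l0.+1 (fun g => y m (NN m d + l0 - g)) (fun g => y_le1 _ R2).
have h2 := @sum_le_len (l0 + (hh m - d)).+1 (hh m).+1 (fun g => y m (NN m d + l0 - g)) (fun g => y_le1 _ R2).
rewrite /NN in h1 h2 *.
set T := \sum_(1 <= f < (hh m - d).+1) _.
lia.
Qed.

Lemma contrib_good m d n l0 i : 2 <= rho m -> d < rho m -> hh m <= n ->
  n == NN m d + l0 %[mod rho m * pr m i] ->
  \sum_(1 <= g < (hh m).+1) (g \in A m d) * W m i (n - g) <=
  \sum_(1 <= g < (hh m).+1) W m i (NN m d + l0 - g).
Proof.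
move=> R2 dR hn good.
have HN := NN_ge dR.
apply: leq_sum_nat => g /andP[g1 g2].
case: (g \in A m d); rewrite ?mul0n ?mul1n //.
case Wn: (W m i (n - g)) => //.
suff -> : W m i (NN m d + l0 - g) by [].
move: Wn; rewrite /W => /eqP <-; rewrite eq_sym modsub ?(eqP good) //; lia.
Qed.


Lemma y_pos_W m v : 2 <= rho m -> 0 < y m v -> W m (v %% rho m) v.
Proof. by move=> R2; rewrite y_W //; case: (W _ _ _). Qed.

Lemma cls_eq q a g1 g2 : g1 <= a -> g2 <= a -> g1 %% q = g2 %% q -> (a - g1) %% q = (a - g2) %% q.
Proof. by move=> h1 h2 E; apply/eqP; rewrite modsub2 // E. Qed.

Lemma NNl_mod m d l : d < rho m -> l < rho m -> (NN m d + l) %% rho m = l.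
Proof.
move=> dR lR; have := divnK (NN_mod dR) => E.
by rewrite -E modnMDl modn_small.
Qed.

Lemma prod3_le1 (a : bool) b c : b <= 1 -> c <= 1 -> a * b * c <= 1.
Proof. by case: a; case: b => [|[|]]; case: c => [|[|]]. Qed.

Lemma prod3_pos (a : bool) b c : 0 < a * b * c -> [/\ a, 0 < b & 0 < c].
Proof. by rewrite !muln_gt0 => /andP[/andP[]]; case: a. Qed.

Lemma pos_bool (b : bool) : 0 < b -> b. Proof. by case: b. Qed.

Lemma iota_le a b g : g \in index_iota a b.+1 -> a <= g <= b.
Proof. rewrite mem_iota => /andP[h1 h2]; apply/andP; split => //; lia. Qed.

Lemma contrib_bad m d n l0 i0 : 2 <= rho m -> d < rho m -> hh m <= n ->
  n %% rho m = l0 -> l0 <= d -> i0 < rho m ->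
  ~~ (n == NN m d + l0 %[mod rho m * pr m i0]) ->
  \sum_(1 <= g < (hh m).+1) (g \in A m d) * W m i0 (n - g) <= d.
Proof.
move=> R2 dR hn nl0 ld Hi0 bad.
have dh := hh_ge R2 dR; have HN := NN_ge dR; have R0 := rho_gt0 R2.
have l0R : l0 < rho m by apply: leq_ltn_trans ld dR.
apply: leq_trans (contribA (fun g => W m i0 (n - g)) R2 dh) _.
rewrite (sum_split_one _ (c := l0)); last by rewrite ltnS ld.
rewrite big1_seq ?add0n; last first.
  move=> g /andP[_] /iota_le /andP[g1 gh].
  have gn : g <= n by apply: leq_trans gh hn.
  have gN : g <= NN m d + l0 by apply: leq_trans gh (leq_trans HN (leq_addr _ _)).
  case W0: (W m i0 (n - g)); last by rewrite muln0.
  case: (posnP (y m (NN m d + l0 - g))) => [->|yp]; first by rewrite muln0 mul0n.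
  exfalso; move: bad; apply/negP/negPn.
  have cl : (NN m d + l0 - g) %% rho m = i0.
    rewrite -(W_cls Hi0 W0); apply/eqP; rewrite modsub //.
    by rewrite NNl_mod ?nl0.
  have := y_pos_W R2 yp; rewrite cl /W => /eqP E1.
  move: W0; rewrite /W => /eqP E2.
  by rewrite eq_sym -(modsub _ gN gn) E1 E2.
apply: leq_trans (_ : \sum_(0 <= l < d.+1) (if l == l0 then 0 else 1) <= d).
  apply: leq_sum_nat => l /andP[_ ld1]; case: eqP => // /eqP ne.
  have lR : l < rho m by apply: leq_trans ld1 dR.
  apply: sum_le1n => [g|g1 g2 h1 h12 h2 P1 P2].
    by apply: prod3_le1; [apply: y_le1 | apply: W_le1].
  have [/andP[a1 b1] y1 w1] := prod3_pos P1.
  have [/andP[a2 b2] y2 w2] := prod3_pos P2.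
  move/pos_bool in w1; move/pos_bool in w2.
  have g2h : g2 <= hh m.
    move: a2 b2 ld1 dh; clear; lia.
  have g1h : g1 <= hh m by apply: leq_trans (ltnW h12) g2h.
  have g2n : g2 <= n by apply: leq_trans g2h hn.
  have g1n : g1 <= n by apply: leq_trans g1h hn.
  have g2N : g2 <= NN m d + l by apply: leq_trans g2h (leq_trans HN (leq_addr _ _)).
  have g1N : g1 <= NN m d + l by apply: leq_trans g1h (leq_trans HN (leq_addr _ _)).
  have gg : g1 = g2 %[mod rho m * pr m i0].
    apply/eqP; rewrite -(modsub2 _ g1n g2n).
    by move: w1 w2; rewrite /W => /eqP -> /eqP ->.
  have ggR : g1 %% rho m = g2 %% rho m.
    by rewrite -(modn_dvdm g1 (dvdn_mulr (pr m i0) (dvdnn (rho m)))) gg modn_dvdm // dvdn_mulr.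
  set i1 := (NN m d + l - g1) %% rho m.
  have Hi1 : i1 < rho m by rewrite ltn_pmod.
  have e12 : (NN m d + l - g2) %% rho m = i1 by rewrite /i1; apply: cls_eq.
  have ne01 : i0 != i1.
    apply/negP => /eqP e; move: ne; apply/negP/negPn/eqP.
    have : (n - g1) %% rho m = (NN m d + l - g1) %% rho m by rewrite -/i1 -e (W_cls Hi0 w1).
    move/eqP; rewrite modsub //.
    by rewrite NNl_mod ?nl0 // => /eqP.
  have W1 := y_pos_W R2 y1; have W2 := y_pos_W R2 y2.
  rewrite -/i1 in W1; rewrite e12 in W2.
  exact: (crt R2 Hi0 Hi1 ne01 h12 g2h g2n g2N w1 w2 W1 W2).
have := @sum_split_one 0 d.+1 l0 (fun=> 1) (_ : 0 <= l0 < d.+1).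
rewrite sum_nat_const_nat /= => H; rewrite ltnS ld in H.
move: (H isT); clear; lia.
Qed.


Lemma pair_bound m d n l : 2 <= rho m -> d < rho m -> hh m <= n ->
  d < n %% rho m -> l <= d ->
  \sum_(1 <= g < (hh m).+1)
     ((l < g) && (g - l <= hh m - d)) * y m (NN m d + l - g) * y m (n - g) <= rho m.
Proof.
move=> R2 dR hn nal ld.
have dh := hh_ge R2 dR; have HN := NN_ge dR; have R0 := rho_gt0 R2.
have lR : l < rho m by apply: leq_ltn_trans ld dR.
apply: sum_pigeon_n => // [g|g1 g2 h1 h12 h2 gg P1 P2].
  by apply: prod3_le1; apply: y_le1.
have [/andP[a1 b1] y1 y1'] := prod3_pos P1.
have [/andP[a2 b2] y2 y2'] := prod3_pos P2.
have g2h : g2 <= hh m by move: a2 b2 ld dh; clear; lia.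
have g1h : g1 <= hh m by apply: leq_trans (ltnW h12) g2h.
have g2n : g2 <= n by apply: leq_trans g2h hn.
have g1n : g1 <= n by apply: leq_trans g1h hn.
have g2N : g2 <= NN m d + l by apply: leq_trans g2h (leq_trans HN (leq_addr _ _)).
have g1N : g1 <= NN m d + l by apply: leq_trans g1h (leq_trans HN (leq_addr _ _)).
set i := (n - g1) %% rho m.
set i' := (NN m d + l - g1) %% rho m.
have Hi : i < rho m by rewrite ltn_pmod.
have Hi' : i' < rho m by rewrite ltn_pmod.
have e1 : (n - g2) %% rho m = i by rewrite /i; apply: cls_eq.
have e2 : (NN m d + l - g2) %% rho m = i' by rewrite /i'; apply: cls_eq.
have ne : i != i'.
  apply/negP => /eqP e.
  have : (n - g1 == NN m d + l - g1 %[mod rho m]) by rewrite -/i -/i' e.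
  rewrite modsub // NNl_mod // => /eqP E.
  by move: nal; rewrite E ltnNge ld.
have W1 := y_pos_W R2 y1; have W2 := y_pos_W R2 y2.
have W3 := y_pos_W R2 y1'; have W4 := y_pos_W R2 y2'.
rewrite -/i' in W1; rewrite e2 in W2; rewrite -/i in W3; rewrite e1 in W4.
exact: (crt R2 Hi Hi' ne h12 g2h g2n g2N W3 W4 W1 W2).
Qed.

Lemma cong_L2 m a b : 2 <= rho m -> (forall i, i < rho m -> a == b %[mod rho m * pr m i]) ->
  a == b %[mod L2 m].
Proof.
move=> R2 H; have R0 := rho_gt0 R2.
wlog ba : a b H / b <= a.
  move=> W; case: (leqP b a) => [|/ltnW ab]; first exact: W.
  by rewrite eq_sym; apply: W => // i Hi; rewrite eq_sym; apply: H.
rewrite eqn_mod_dvd //.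
have DR : rho m %| a - b.
  by apply: dvdn_trans (dvdn_mulr (pr m 0) (dvdnn _)) _; rewrite -eqn_mod_dvd // H.
rewrite -(divnK DR) /L2 [_ * rho m]mulnC dvdn_pmul2l //.
apply/dvdn_biglcmP => [[i Hi]] _ /=.
by rewrite -(dvdn_pmul2l R0) [rho m * (_ %/ _)]mulnC divnK // -eqn_mod_dvd // H.
Qed.


Theorem lemma16 (m : nat) (Hrho : 2 <= rho m) (d : nat)
  (Hd : d <= rho m - 1) (n : nat) (Hn : hh m <= n)
  (Hcong : forall j, j <= d ->
     n != hh m - rho m + L1 m d + j %[mod L2 m]) :
  \sum_(f <- A m d) y m (n - f) < Tot m d.
Proof.
have R2 := Hrho; have R0 := rho_gt0 R2.
have dR : d < rho m by move: Hd R2; clear; lia.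
have dh := hh_ge R2 dR; have HN := NN_ge dR.
have Rh : rho m <= hh m by rewrite /hh leq_pmulr // kk_gt0.
have EN : hh m - rho m + L1 m d = NN m d by rewrite /NN; move: Rh; clear; lia.
rewrite A_sum //.
have ES : \sum_(1 <= g < (hh m).+1) (g \in A m d) * y m (n - g) =
          \sum_(0 <= i < rho m) \sum_(1 <= g < (hh m).+1) (g \in A m d) * W m i (n - g).
  rewrite exchange_big_nat /=; apply: eq_bigr => g _.
  by rewrite y_sumW // big_distrr.
have ET : Tot m d = \sum_(0 <= i < rho m) \sum_(1 <= f < (hh m - d).+1) W m i (NN m d - f).
  rewrite Tot_sum // exchange_big_nat /=; apply: eq_bigr => f _.
  by rewrite y_sumW.
case: (leqP (n %% rho m) d) => [al|nal].
  set l0 := n %% rho m.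
  have [i0 [Hi0 bad]] : exists i0, i0 < rho m /\ ~~ (n == NN m d + l0 %[mod rho m * pr m i0]).
    case: (boolP [exists i : 'I_(rho m), ~~ (n == NN m d + l0 %[mod rho m * pr m i])]).
      by move=> /existsP[[i Hi] bi]; exists i.
    rewrite negb_exists => /forallP H; exfalso.
    move: (Hcong l0 al); rewrite EN => /negP; apply; apply: cong_L2 => // i Hi.
    by move: (H (Ordinal Hi)); rewrite negbK.
  rewrite ES.
  set c := fun i => \sum_(1 <= g < (hh m).+1) (g \in A m d) * W m i (n - g).
  set G := fun i => \sum_(1 <= g < (hh m).+1) W m i (NN m d + l0 - g).
  have cG : forall i, i < rho m -> c i <= G i.
    move=> i Hi; case: (boolP (n == NN m d + l0 %[mod rho m * pr m i])) => gd.
      exact: contrib_good.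
    apply: leq_trans (contrib_bad R2 dR Hn (erefl _) al Hi gd) _.
    apply: leq_trans (G_ge R2 dR Hi al); move: dR; clear; lia.
  have c0 : c i0 <= d := contrib_bad R2 dR Hn (erefl _) al Hi0 bad.
  have G0 : 2 * rho m <= G i0 := G_ge R2 dR Hi0 al.
  have SG : \sum_(0 <= i < rho m) G i <= Tot m d + d.
    apply: leq_trans (sumG_le R2 dR al).
    rewrite /G exchange_big_nat /=; apply: leq_sum => g _; rewrite y_sumW //.
  have Hi00 : 0 <= i0 < rho m by rewrite Hi0.
  rewrite (sum_split_one c Hi00).
  have SG' := SG; rewrite (sum_split_one G Hi00) in SG'.
  have : \sum_(0 <= i < rho m) (if i == i0 then 0 else c i) <=
         \sum_(0 <= i < rho m) (if i == i0 then 0 else G i).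
    apply: leq_sum_nat => i /andP[_ Hi]; case: eqP => // _; exact: cG.
  move: c0 G0 SG' dR; clear; lia.
apply: leq_ltn_trans (contribA (fun g => y m (n - g)) R2 dh) _.
apply: leq_ltn_trans (_ : \sum_(0 <= l < d.+1) rho m < _).
  apply: leq_sum_nat => l /andP[_ ld]; apply: pair_bound => //.
rewrite sum_nat_const_nat subn0 ET.
have : \sum_(0 <= i < rho m) 2 * rho m <=
       \sum_(0 <= i < rho m) \sum_(1 <= f < (hh m - d).+1) W m i (NN m d - f).
  apply: leq_sum_nat => i /andP[_ Hi]; exact: C_ge.
rewrite sum_nat_const_nat subn0.
have : d.+1 * rho m <= rho m * rho m by rewrite leq_mul2r dR orbT.
move: R2; clear; nia.
Qed.
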